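(* Let $G=(V,E)$ be a connected simple graph and let $R_{u,v}$ denote the effective resistance between $u$ and $v$ in the network $\mathcal{N}_G$. Then for every edge $uv\in E$, $$R_{u,v}\le \frac{1}{\tfrac12|N(u)\cap N(v)|+1}.$$ Moreover, if some biconnected component of $G$ is not a clique, then there is an edge $uv\in E$ for which this inequality is strict.
   Context: $\mathcal{N}_G$ is the electrical network on vertex set $V$ in which every edge of $G$ is a resistor of resistance $1$; the effective resistance $R_{u,v}$ is the voltage difference between $u$ and $v$ when a unit current is injected at $u$ and extracted at $v$. $N(u)=\{v\in V: uv\in E\}$ is the open neighbourhood of $u$. A biconnected component (block) of $G$ is a maximal connected subgraph of $G$ that has no cut vertex of its own. *)

(* Defs.v *)
(* Graph: symmetric irreflexive relation on a finType. *)
From HB Require Import structures.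
From mathcomp Require Import all_boot all_order all_algebra.
From Stdlib Require Import ClassicalEpsilon.
Set Implicit Arguments. Unset Strict Implicit. Unset Printing Implicit Defensive.
Import Order.TTheory GRing.Theory Num.Theory.

Section Graphs.
Variable T : finType.
Variable e : rel T.

Definition graph_connected : Prop := forall x y : T, connect e x y.

Definition nbhd (u : T) : {set T} := [set w | e u w].

Definition induced_rel (S : {set T}) : rel T :=
  [rel x y | [&& e x y, x \in S & y \in S]].

Definition connected_on (S : {set T}) : Prop :=
  forall x y, x \in S -> y \in S -> connect (induced_rel S) x y.

Definition biconnected_set (S : {set T}) : Prop :=
  [/\ S != set0, connected_on S & forall z, z \in S -> connected_on (S :\ z)].

(* S is the vertex set of a biconnected component (block) of G.
   Blocks (maximal subgraphs without cut vertex) are induced subgraphs,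
   so they are determined by their vertex sets. *)
Definition is_block (S : {set T}) : Prop :=
  biconnected_set S /\
  forall S' : {set T}, S \subset S' -> biconnected_set S' -> S' = S.

Definition is_clique (S : {set T}) : Prop :=
  forall x y, x \in S -> y \in S -> x != y -> e x y.

Variable R : realFieldType.
Local Open Scope ring_scope.

(* p is a node potential in the unit-resistance network N_G when a unit
   current is injected at u and extracted at v (Kirchhoff's current law;
   current on edge xy is p x - p y). *)
Definition unit_potential (u v : T) (p : T -> R) : Prop :=
  forall x : T,
    \sum_(y | e x y) (p x - p y) = (x == u)%:R - (x == v)%:R.

(* effective resistance R_{u,v}: voltage difference p u - p v
   (well defined for connected G: potentials are unique up to constants) *)
Definition eff_res (u v : T) : R :=
  epsilon (inhabits 0)
    (fun r => exists p : T -> R, unit_potential u v p /\ r = p u - p v).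

End Graphs.

(* Main.v *)
Require Import Defs.
From HB Require Import structures.
From mathcomp Require Import all_boot all_order all_algebra.
From mathcomp Require Import ring lra.
From Stdlib Require Import ClassicalEpsilon Classical.
Import Order.TTheory GRing.Theory Num.Theory.
Local Open Scope ring_scope.
Set Implicit Arguments. Unset Strict Implicit.

Lemma connect_ind (T : finType) (r : rel T) (P : T -> Prop) :
  (forall x y, r x y -> P x -> P y) -> forall x y, connect r x y -> P x -> P y.
Proof.
move=> H x y /connectP [s]; elim: s x => [|z s IH] x /=; first by move=> _ ->.
case/andP=> rxz ps Ey Px; exact: (IH z ps Ey (H x z rxz Px)).
Qed.

Lemma L1 (R : realFieldType) (T : finType) (e : rel T) (esym : symmetric e)
  (q : T -> R) (h : T -> T -> R) (hanti : forall x y, h y x = - h x y) :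
  \sum_x \sum_(y | e x y) (q x - q y) * h x y =
  2 * \sum_x q x * \sum_(y | e x y) h x y.
Proof.
have E1 : \sum_x \sum_(y | e x y) q y * h x y =
          - \sum_x q x * \sum_(y | e x y) h x y.
  rewrite (eq_bigr (fun x => \sum_y (if e x y then q y * h x y else 0)));
    last by move=> x _; rewrite big_mkcond.
  rewrite exchange_big /= -sumrN; apply: eq_bigr => y _.
  rewrite mulr_sumr -sumrN [RHS]big_mkcond; apply: eq_bigr => x _.
  rewrite (esym x y); case: (e y x) => //=.
  by rewrite hanti mulrN.
have E2 : forall x, \sum_(y | e x y) (q x - q y) * h x y =
   q x * \sum_(y | e x y) h x y - \sum_(y | e x y) q y * h x y.
  by move=> x; rewrite mulr_sumr -sumrB; apply: eq_bigr => y _; rewrite mulrBl.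
rewrite (eq_bigr _ (fun x _ => E2 x)) sumrB E1; ring.
Qed.

Lemma sum_ind (R : pzRingType) (T : finType) (F : T -> R) (z : T) :
  \sum_x F x * (x == z)%:R = F z.
Proof.
rewrite (bigD1 z) //= eqxx mulr1 big1 ?addr0 // => y /negbTE ->.
by rewrite mulr0.
Qed.

Lemma sum_ind_cond (R : pzRingType) (T : finType) (P : pred T) (z : T) :
  \sum_(y | P y) (y == z)%:R = (P z)%:R :> R.
Proof.
rewrite big_mkcond (bigD1 z) //= eqxx big1 ?addr0; first by case: (P z).
by move=> y /negbTE ->; case: (P y).
Qed.

Lemma sum_in_set (R : pzRingType) (T : finType) (P : pred T) (C : {set T}) :
  (forall y, y \in C -> P y) -> \sum_(y | P y) (y \in C)%:R = #|C|%:R :> R.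
Proof.
move=> H; rewrite big_mkcond.
rewrite (eq_bigr (fun y => if y \in C then 1 else 0)); last first.
  move=> y _; case yC: (y \in C); first by rewrite (H y yC).
  by case: (P y).
by rewrite -big_mkcond sumr_const.
Qed.

Lemma sum_enumT (V : nmodType) (T : finType) (F : T -> V) :
  \sum_x F x = \sum_(k < #|T|) F (enum_val k).
Proof.
rewrite (reindex (enum_val : 'I_#|T| -> T)) //=; apply: onW_bij; exact: enum_val_bij.
Qed.

Lemma sum_b (R : pzRingType) (T : finType) (p : T -> R) (u v : T) :
  \sum_x p x * ((x == u)%:R - (x == v)%:R) = p u - p v.
Proof.
rewrite (eq_bigr (fun x => p x * (x == u)%:R - p x * (x == v)%:R)); last first.
  by move=> x _; rewrite mulrBr.
by rewrite sumrB !sum_ind.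
Qed.

Lemma ker_const (R : realFieldType) (T : finType) (e : rel T) (esy : symmetric e)
  (conn : graph_connected e) (w : T -> R) :
  (forall x, \sum_(y | e x y) (w x - w y) = 0) -> forall a b, w a = w b.
Proof.
move=> Hw.
have H := @L1 R T e esy w (fun x y => w x - w y)
   (fun x y => esym (opprB (w x) (w y))).
rewrite [X in _ = 2 * X]big1 ?mulr0 in H; last by move=> x _ /=; rewrite Hw mulr0.
have Hx : forall x y, e x y -> w x = w y.
  move=> x y exy.
  have H1 := psumr_eq0P (fun x _ => sumr_ge0 _ (fun y _ => (sqr_ge0 (w x - w y) : 0 <= (w x - w y) * (w x - w y)))) H (erefl true : predT x).
  have H2 := psumr_eq0P (fun y _ => (sqr_ge0 (w x - w y) : 0 <= (w x - w y) * (w x - w y))) (H1 x) exy.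
  by apply/eqP; rewrite -subr_eq0; move/eqP: H2; rewrite mulf_eq0 orbb.
move=> a b.
apply: (@connect_ind T e (fun z => w a = w z) _ a b (conn a b) erefl).
by move=> x y exy ->; apply: Hx.
Qed.

Definition lapl (R : pzRingType) (T : finType) (e : rel T) (x y : T) : R :=
  (x == y)%:R * (\sum_(z | e x z) 1) - (e x y)%:R.

Lemma lapl_sum (R : comPzRingType) (T : finType) (e : rel T) (w : T -> R) (x : T) :
  \sum_y lapl R e x y * w y = \sum_(y | e x y) (w x - w y).
Proof.
rewrite /lapl (eq_bigr (fun y => (\sum_(z | e x z) 1) * w y * (y == x)%:R
   - (e x y)%:R * w y)); last first.
  by move=> y _ /=; rewrite (eq_sym x y); ring.
rewrite sumrB sum_ind sumrB mulr_suml; congr (_ - _).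
  by apply: eq_bigr => z _; rewrite mul1r.
by rewrite [RHS]big_mkcond; apply: eq_bigr => y _; case: (e x y); rewrite ?mul1r ?mul0r.
Qed.

Lemma lapl_sym (R : pzRingType) (T : finType) (e : rel T) (esy : symmetric e) x y :
  lapl R e x y = lapl R e y x.
Proof.
rewrite /lapl esy; have [->|nxy] := eqVneq x y; first by [].
by rewrite !mul0r.
Qed.

Lemma pot_exists (R : realFieldType) (T : finType) (e : rel T) (esy : symmetric e)
  (conn : graph_connected e) (u v : T) :
  exists p : T -> R, unit_potential e u v p.
Proof.
pose L : 'M[R]_#|T| := \matrix_(i, j) lapl R e (enum_val i) (enum_val j).
pose b : 'rV[R]_#|T| := \row_j ((enum_val j == u)%:R - (enum_val j == v)%:R).
have : (b <= L)%MS.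
  rewrite submxE; apply/eqP/matrixP => i j; rewrite !mxE.
  pose w : T -> R := fun x => cokermx L (enum_rank x) j.
  have Hk : forall x, \sum_(y | e x y) (w x - w y) = 0.
    move=> x; have := congr1 (fun M : 'M[R]_#|T| => M (enum_rank x) j) (mulmx_coker L).
    rewrite !mxE => H; rewrite -lapl_sum sum_enumT -[in RHS]H.
    by apply: eq_bigr => k _; rewrite /w enum_valK; congr (_ * _); rewrite mxE enum_rankK.
  have wc := ker_const esy conn Hk.
  rewrite (eq_bigr (fun k => w (enum_val k) * ((enum_val k == u)%:R - (enum_val k == v)%:R))); last first.
    by move=> k _; rewrite /w enum_valK mxE mulrC.
  by rewrite -(@sum_enumT _ _ (fun x => w x * ((x == u)%:R - (x == v)%:R))) sum_b (wc u v) subrr.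
case/submxP => D hD.
exists (fun x => D 0 (enum_rank x)); rewrite /unit_potential => x.
have := congr1 (fun M : 'rV[R]_#|T| => M 0 (enum_rank x)) hD; rewrite !mxE enum_rankK => H.
rewrite H -lapl_sum sum_enumT; apply: eq_bigr => k _.
by rewrite mxE enum_valK enum_rankK (lapl_sym _ esy) mulrC.
Qed.

Lemma thomson (R : realFieldType) (T : finType) (e : rel T) (esy : symmetric e)
  (u v : T) (f : T -> T -> R) (fanti : forall x y, f y x = - f x y)
  (fdiv : forall x, \sum_(y | e x y) f x y = (x == u)%:R - (x == v)%:R)
  (p : T -> R) (hp : unit_potential e u v p) :
  \sum_x \sum_(y | e x y) (f x y - (p x - p y)) * (f x y - (p x - p y)) =
  \sum_x \sum_(y | e x y) f x y * f x y - 2 * (p u - p v).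
Proof.
have A := L1 esy p fanti.
rewrite (eq_bigr _ (fun x _ => congr1 (fun z => p x * z) (fdiv x))) sum_b in A.
have B := @L1 R T e esy p (fun x y => p x - p y) (fun x y => esym (opprB (p x) (p y))).
rewrite (eq_bigr _ (fun x _ => congr1 (fun z => p x * z) (hp x))) sum_b in B.
have E : forall x, \sum_(y | e x y) (f x y - (p x - p y)) * (f x y - (p x - p y)) =
   \sum_(y | e x y) f x y * f x y - 2 * \sum_(y | e x y) (p x - p y) * f x y
   + \sum_(y | e x y) (p x - p y) * (p x - p y).
  by move=> x; rewrite mulr_sumr -sumrB -big_split /=; apply: eq_bigr => y _; ring.
rewrite (eq_bigr _ (fun x _ => E x)) big_split /= sumrB -mulr_sumr A /= B; ring.
Qed.

Definition fA (T : finType) (u v : T) (C : {set T}) (x y : T) : bool :=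
  ((x == u) && ((y == v) || (y \in C))) || ((y == v) && (x \in C)).
Definition fe (T : finType) (u v : T) (C : {set T}) (x y : T) : bool :=
  fA u v C x y || fA u v C y x.
Definition qf (R : fieldType) (T : finType) (u : T) (C : {set T}) (a : R) (x : T) : R :=
  if x == u then a else if x \in C then a / 2 else 0.
Definition flow (R : fieldType) (T : finType) (u v : T) (C : {set T}) (a : R) (x y : T) : R :=
  if fe u v C x y then qf u C a x - qf u C a y else 0.

Lemma flow_anti (R : fieldType) (T : finType) (u v : T) (C : {set T}) (a : R) x y :
  flow u v C a y x = - flow u v C a x y.
Proof.
rewrite /flow /fe orbC; case: ifP => _; [by rewrite opprB | by rewrite oppr0].
Qed.

Ltac fld := field; try done.

Lemma flow_div (R : realFieldType) (T : finType) (e : rel T) (esy : symmetric e)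
  (eirr : irreflexive e) (u v : T) (huv : e u v) (a : R)
  (ha : a * (#|nbhd e u :&: nbhd e v|%:R / 2 + 1) = 1) :
  forall x, \sum_(y | e x y) flow u v (nbhd e u :&: nbhd e v) a x y =
            (x == u)%:R - (x == v)%:R.
Proof.
set C := nbhd e u :&: nbhd e v in ha *.
have inC : forall y, (y \in C) = e u y && e v y by move=> y; rewrite !inE.
have uv : u != v by apply/eqP => h; rewrite h eirr in huv.
have vu : v != u by rewrite eq_sym.
have uC : u \notin C by rewrite inC eirr.
have vC : v \notin C by rewrite inC eirr andbF.
move=> x.
have [->|xu] := eqVneq x u.
  rewrite (eq_bigr (fun y => (y == v)%:R * a + (y \in C)%:R * (a / 2))); last first.
    move=> y euy; have yu : y != u by apply/eqP => h; rewrite h eirr in euy.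
    rewrite /flow /fe /fA /qf eqxx (negbTE yu) (negbTE uC) (negbTE uv) /=.
    have [->|yv] := eqVneq y v; first by rewrite ?(negbTE vC) ?(negbTE vu) /=; fld.
    by case: (y \in C) => /=; fld.
  rewrite big_split /= -!mulr_suml sum_ind_cond huv sum_in_set; last first.
    by move=> y; rewrite inC => /andP[].
  rewrite ?eqxx (negbTE uv) /=.
  transitivity (a * (#|C|%:R / 2 + 1)); [fld | rewrite ha; fld].
have [->|xv] := eqVneq x v.
  rewrite (eq_bigr (fun y => - ((y == u)%:R * a) - (y \in C)%:R * (a / 2))); last first.
    move=> y evy; have yv : y != v by apply/eqP => h; rewrite h eirr in evy.
    rewrite /flow /fe /fA /qf eqxx (negbTE yv) (negbTE vC) ?(negbTE vu) /=.
    have [->|yu] := eqVneq y u; first by rewrite ?eqxx (negbTE uC) /=; fld.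
    by rewrite ?orbF; case: (y \in C) => /=; fld.
  rewrite sumrB sumrN -!mulr_suml sum_ind_cond (esy v u) huv sum_in_set; last first.
    by move=> y; rewrite inC => /andP[].
  rewrite ?eqxx ?(negbTE vu) /=.
  transitivity (- (a * (#|C|%:R / 2 + 1))); [fld | rewrite ha; fld].
case xC: (x \in C).
  rewrite (eq_bigr (fun y => (y == v)%:R * (a / 2) - (y == u)%:R * (a / 2))); last first.
    move=> y exy.
    rewrite /flow /fe /fA /qf xC (negbTE xu) (negbTE xv) /=.
    have [->|yu] := eqVneq y u; first by rewrite ?eqxx ?(negbTE uv) /=; fld.
    have [->|yv] := eqVneq y v; first by rewrite ?eqxx ?(negbTE vu) ?(negbTE vC) /=; fld.
    by rewrite /= ?andbF ?orbF; fld.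
  move: xC; rewrite inC => /andP[eux evx].
  rewrite sumrB -!mulr_suml !sum_ind_cond (esy x u) (esy x v) eux evx /=; fld.
rewrite big1 /=; first by ring.
move=> y exy; rewrite /flow /fe /fA xC (negbTE xu) (negbTE xv) /=.
by rewrite !andbF /=.
Qed.

Lemma flow_energy (R : realFieldType) (T : finType) (e : rel T) (esy : symmetric e)
  (eirr : irreflexive e) (u v : T) (huv : e u v) (a : R)
  (ha : a * (#|nbhd e u :&: nbhd e v|%:R / 2 + 1) = 1) :
  \sum_x \sum_(y | e x y) flow u v (nbhd e u :&: nbhd e v) a x y *
                          flow u v (nbhd e u :&: nbhd e v) a x y = 2 * a.
Proof.
have fdiv := flow_div esy eirr huv ha.
set C := nbhd e u :&: nbhd e v in fdiv *.
rewrite (eq_bigr (fun x => \sum_(y | e x y) (qf u C a x - qf u C a y) * flow u v C a x y));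
  last first.
  move=> x _; apply: eq_bigr => y _; rewrite /flow; case: ifP => _ //.
  by rewrite !mulr0.
rewrite (@L1 R T e esy (qf u C a) (flow u v C a) (flow_anti u v C a)).
rewrite (eq_bigr _ (fun x _ => congr1 (fun z => qf u C a x * z) (fdiv x))) sum_b.
have vu : v != u by apply/eqP => h; rewrite h eirr in huv.
have vC : v \notin C by rewrite !inE eirr andbF.
by rewrite /qf eqxx (negbTE vu) (negbTE vC) subr0.
Qed.

Lemma main_key (R : realFieldType) (T : finType) (e : rel T) (esy : symmetric e)
  (eirr : irreflexive e) (conn : graph_connected e) (u v : T) (huv : e u v) :
  exists p : T -> R, unit_potential e u v p /\ eff_res e R u v = p u - p v /\
    \sum_x \sum_(y | e x y)
       (flow u v (nbhd e u :&: nbhd e v) (1 / (#|nbhd e u :&: nbhd e v|%:R / 2 + 1)) x y - (p x - p y)) *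
       (flow u v (nbhd e u :&: nbhd e v) (1 / (#|nbhd e u :&: nbhd e v|%:R / 2 + 1)) x y - (p x - p y))
    = 2 * (1 / (#|nbhd e u :&: nbhd e v|%:R / 2 + 1)) - 2 * (p u - p v).
Proof.
set C := nbhd e u :&: nbhd e v.
set a : R := 1 / (#|C|%:R / 2 + 1).
have hpos : 0 < #|C|%:R / 2 + 1 :> R by have := ler0n R #|C|; lra.
have ha : a * (#|C|%:R / 2 + 1) = 1 by rewrite /a mul1r mulVf // lt0r_neq0.
have [p0 hp0] := pot_exists R esy conn u v.
have := epsilon_spec (inhabits (0:R))
  (fun r => exists p, unit_potential e u v p /\ r = p u - p v)
  (ex_intro _ _ (ex_intro _ p0 (conj hp0 erefl))).
case=> p [hp hr]; exists p; split => //; split; first exact: hr.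
rewrite (thomson esy (flow_anti u v C a) (flow_div esy eirr huv ha) hp).
by rewrite (flow_energy esy eirr huv ha).
Qed.

Unset Implicit Arguments. Set Strict Implicit.

Theorem mainTheorem5 (R : realFieldType) (T : finType) (e : rel T)
  (e_sym : symmetric e) (e_irr : irreflexive e)
  (G_conn : graph_connected e) :
  (forall u v : T, e u v ->
     eff_res e R u v <=
       1 / ((#|nbhd e u :&: nbhd e v|)%:R / 2 + 1))
  /\
  ((exists S : {set T}, is_block e S /\ ~ is_clique e S) ->
   exists u v : T, e u v /\
     eff_res e R u v <
       1 / ((#|nbhd e u :&: nbhd e v|)%:R / 2 + 1)).
Proof.
have sq0 : forall (z : R), 0 <= z * z.
  by move=> z; exact: (sqr_ge0 z).
split.
  move=> u v huv.
  have [p [hp [-> H]]] := main_key R e_sym e_irr G_conn huv.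
  set S := (X in X = _) in H.
  have : 0 <= S by apply: sumr_ge0 => x _; apply: sumr_ge0 => y _; apply: sq0.
  lra.
case=> S [[[S0 Sconn Scut] _] nc].
have [x0 [y0 [x0S [y0S [nxy nexy]]]]] :
    exists x0 y0, x0 \in S /\ y0 \in S /\ x0 != y0 /\ ~~ e x0 y0.
  apply: NNPP => H; apply: nc => x y xS yS xy; apply: NNPP => nexy; apply: H.
  by exists x, y; do ! split => //; apply/negP.
have [a0 [b0 [a0S [b0S [ex0a [eab [bx0 nex0b]]]]]]] :
    exists a0 b0, a0 \in S /\ b0 \in S /\ e x0 a0 /\ e a0 b0 /\ b0 != x0 /\ ~~ e x0 b0.
  apply: NNPP => H.
  have step : forall x y, induced_rel e S x y ->
      (x == x0 \/ e x0 x) -> (y == x0 \/ e x0 y).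
    move=> x y /and3P [exy xS yS] [/eqP hx | hx]; first by right; rewrite -hx.
    apply: NNPP => Hy; apply: H; exists x, y; do ! split => //.
      by apply/eqP => hyx; apply: Hy; left; rewrite hyx.
    by apply/negP => h; apply: Hy; right.
  have := @connect_ind T (induced_rel e S) (fun z => z == x0 \/ e x0 z) step x0 y0
    (Sconn x0 y0 x0S y0S) (or_introl (eqxx x0)).
  case => [h | h]; first by move: nxy; rewrite eq_sym h.
  by move: nexy; rewrite h.
exists a0, b0; split => //.
have [p [hp [-> H]]] := main_key R e_sym e_irr G_conn eab.
set C := nbhd e a0 :&: nbhd e b0 in H *.
set a : R := 1 / (#|C|%:R / 2 + 1) in H *.
have hpos : 0 < #|C|%:R / 2 + 1 :> R by have := ler0n R #|C|; lra.
have apos : 0 < a by rewrite /a mul1r invr_gt0.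
set Sm := (X in X = _) in H.
have Sm0 : 0 <= Sm by apply: sumr_ge0 => x _; apply: sumr_ge0 => y _; apply: sq0.
rewrite lt_neqAle; apply/andP; split; last by lra.
apply/eqP => Heq.
have HS : Sm = 0 by rewrite H Heq; ring.
have hf : forall x y, e x y -> flow a0 b0 C a x y = p x - p y.
  move=> x y exy.
  have H1 := psumr_eq0P (fun x _ => sumr_ge0 _ (fun y _ => sq0 _)) HS (erefl true : predT x).
  have H2 := psumr_eq0P (fun y _ => sq0 _) (H1 x) exy.
  by apply/eqP; rewrite -subr_eq0; move/eqP: H2; rewrite mulf_eq0 orbb.
have inC : forall y, (y \in C) = e a0 y && e b0 y by move=> y; rewrite !inE.
have ba : b0 != a0 by apply/eqP => h; rewrite h e_irr in eab.
have aC : a0 \notin C by rewrite inC e_irr.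
have bC : b0 \notin C by rewrite inC e_irr andbF.
have xa : x0 != a0 by apply/eqP => h; rewrite h e_irr in ex0a.
have xC : x0 \notin C by rewrite inC (e_sym b0 x0) (negbTE nex0b) andbF.
have huv : p a0 - p b0 = a.
  rewrite -hf // /flow /fe /fA !eqxx /= /qf eqxx (negbTE ba) (negbTE bC); ring.
have hw : forall w, w \in C -> p a0 - p w = a / 2.
  move=> w wC; have wa : w != a0 by apply: contraNneq aC => <-.
  have wb : w != b0 by apply: contraNneq bC => <-.
  move: (wC); rewrite inC => /andP [eaw _].
  rewrite -hf // /flow /fe /fA !eqxx wC ?orbT /= /qf eqxx (negbTE wa) wC ?orbT /=; by field.
have hx : p x0 = p a0.
  have eax : e a0 x0 by rewrite e_sym.
  have := hf a0 x0 eax.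
  have xb : x0 != b0 by rewrite eq_sym.
  rewrite /flow /fe /fA eqxx ?(negbTE xb) ?(negbTE xC) ?(negbTE xa) ?(negbTE ba) /= ?andbF /= => h.
  by move/eqP: h; rewrite eq_sym subr_eq0 => /eqP.
have Hc := Scut a0 a0S x0 b0.
have : p b0 = p a0.
  apply: (@connect_ind T (induced_rel e (S :\ a0)) (fun z => p z = p a0) _ x0 b0 _ hx).
    move=> y y' /and3P [eyy' yS y'S] Py.
    move: yS y'S; rewrite !in_setD1 => /andP [ya _] /andP [y'a _].
    have [yb|yb] := eqVneq y b0; first by move: Py; rewrite yb => h; lra.
    case yC : (y \in C); first by have := hw y yC; rewrite Py => h; lra.
    have := hf y y' eyy'.
    rewrite /flow /fe /fA (negbTE ya) (negbTE y'a) (negbTE yb) yC /= !andbF /= => h.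
    by move/eqP: h; rewrite eq_sym subr_eq0 => /eqP <-.
  apply: Hc; rewrite in_setD1 ?xa ?ba //.
move=> h; lra.
Qed.
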